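(* Let $K$ be a compact and connected subgroup of $U(N)$, let $A\in\mathbb{C}^{N\times N}$ and let $\varphi_0\in\mathbb{R}$. The following are equivalent: (a) $e^{i\varphi_0}\mathcal{O}_K(A)=\mathcal{O}_K(A)$; (b) $e^{i\varphi_0}W_K(C,A)=W_K(C,A)$ for all $C\in\mathbb{C}^{N\times N}$; (c) $e^{i\varphi_0}W_K(A,A)=W_K(A,A)$. Moreover, if $\varphi_0$ is an irrational multiple of $2\pi$ and one of (a), (b), (c) holds for $\varphi_0$, then all of them hold with $\varphi_0$ replaced by any $\varphi\in\mathbb{R}$.
   Context: $U(N)$ is the group of unitary $N\times N$ complex matrices. For a compact connected subgroup $K\subset U(N)$ and $C,A\in\mathbb{C}^{N\times N}$, the relative $C$-numerical range is $W_K(C,A)=\{\mathrm{tr}(C^\dagger UAU^\dagger)\mid U\in K\}$, and the $K$-orbit of $A$ is $\mathcal{O}_K(A)=\{UAU^\dagger\mid U\in K\}$. *)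

(* Defs.v *)
(* Complex numbers are real-closed's
   [complex R] = R[i] over a [realType] R, seen as a numClosedFieldType so that
   MathComp-Analysis equips it (and its matrices) with the norm topology. *)
From mathcomp Require Import all_boot all_algebra.
From mathcomp Require Import all_classical all_reals all_analysis.
From mathcomp Require Export complex.
Import GRing.Theory Num.Theory.
Export numFieldTopology.Exports numFieldNormedType.Exports.
Set Implicit Arguments.
Unset Strict Implicit.
Unset Printing Implicit Defensive.
Local Open Scope ring_scope.
Local Open Scope classical_set_scope.
Local Open Scope complex_scope.

Definition Cplx (R : realType) : numClosedFieldType := R[i].

Definition adj (R : realType) (N : nat) (A : 'M[Cplx R]_N) : 'M[Cplx R]_N :=
  (map_mx conjc A)^T.

Definition unitary (R : realType) (N : nat) (U : 'M[Cplx R]_N) : Prop :=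
  U *m adj U = 1%:M.

Definition compact_connected_subgroup_UN (R : realType) (N : nat)
    (K : set 'M[Cplx R]_N) : Prop :=
  (forall U, K U -> unitary U) /\
  K 1%:M /\
  (forall U V, K U -> K V -> K (U *m V)) /\
  (forall U, K U -> K (invmx U)) /\
  compact K /\ connected K.

Definition orbitK (R : realType) (N : nat) (K : set 'M[Cplx R]_N)
    (A : 'M[Cplx R]_N) : set 'M[Cplx R]_N :=
  [set U *m A *m adj U | U in K].

Definition WK (R : realType) (N : nat) (K : set 'M[Cplx R]_N)
    (C A : 'M[Cplx R]_N) : set (Cplx R) :=
  [set \tr (adj C *m (U *m A *m adj U)) | U in K].

Definition expi (R : realType) (phi : R) : Cplx R :=
  (cos phi)%:C + 'i * (sin phi)%:C.

Definition cond_a (R : realType) (N : nat) (K : set 'M[Cplx R]_N)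
    (A : 'M[Cplx R]_N) (phi : R) : Prop :=
  [set expi phi *: X | X in orbitK K A] = orbitK K A.

Definition cond_b (R : realType) (N : nat) (K : set 'M[Cplx R]_N)
    (A : 'M[Cplx R]_N) (phi : R) : Prop :=
  forall C : 'M[Cplx R]_N,
    [set expi phi * w | w in WK K C A] = WK K C A.

Definition cond_c (R : realType) (N : nat) (K : set 'M[Cplx R]_N)
    (A : 'M[Cplx R]_N) (phi : R) : Prop :=
  [set expi phi * w | w in WK K A A] = WK K A A.

(* Main.v *)
Require Import Defs.
From mathcomp Require Import all_boot all_algebra.
From mathcomp Require Import all_classical all_reals all_analysis.
From mathcomp Require Import ring lra.
Import order.Order.TTheory GRing.Theory Num.Theory.
Local Open Scope ring_scope.
Local Open Scope classical_set_scope.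

Section RealPart.
Variable R : realType.

Lemma grp_int (G : set R) :
  (forall x y, G x -> G y -> G (x - y)) -> forall x, G x ->
  forall k : int, G (k%:~R * x).
Proof.
move=> Gsub x Gx.
have G0 : G 0 by rewrite -(subrr x); apply: (Gsub).
have Gn : forall n : nat, G (n%:R * x).
  elim=> [|n IH]; first by rewrite mul0r.
  have -> : n.+1%:R * x = n%:R * x - (0 - x) by rewrite -natr1; ring.
  by apply: (Gsub) => //; apply: (Gsub).
case=> n.
  by rewrite -pmulrn; exact: Gn.
rewrite NegzE mulrNz mulNr -pmulrn -[X in G X]add0r.
by apply: (Gsub).
Qed.

Lemma subgroup_all (G : set R) (p a : R) :
  (forall x y, G x -> G y -> G (x - y)) -> G p -> 0 < p -> G a ->
  (~ exists q : rat, a = p * ratr q) -> closed G -> forall x, G x.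
Proof.
move=> Gsub Gp p0 Ga airr Gcl.
have Gint := @grp_int G Gsub.
pose P := [set g | G g /\ 0 < g].
have Pne : P !=set0 by exists p.
have Plb : has_lbound P by exists 0 => y [_ /ltW].
have Phi : has_inf P by split.
pose a0 := inf P.
have a0ge : 0 <= a0 by apply: lb_le_inf => // y [_ /ltW].
have [a0pos|] := ltrP 0 a0.
  exfalso.
  have Pa0 : P a0.
    have [//|nPa0] := boolp.pselect (P a0).
    exfalso.
    have [g1 Pg1 g1lt] := inf_adherent a0pos Phi.
    have a0g1 := inf_lb_strict Plb nPa0 Pg1.
    have : 0 < g1 - a0 by rewrite subr_gt0.
    move=> /inf_adherent /(_ Phi) [g2 Pg2 g2lt].
    have a0g2 := inf_lb_strict Plb nPa0 Pg2.
    have Pd : P (g1 - g2).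
      split; first by apply: (Gsub); [case: Pg1|case: Pg2].
      rewrite subr_gt0; rewrite -/a0 in g2lt; lra.
    have := ge_inf Plb Pd; move: g1lt g2lt a0g1 a0g2 a0pos; rewrite -/a0 /=; lra.
  have mult : forall y, G y -> exists k : int, y = k%:~R * a0.
    move=> y Gy; exists (Num.floor (y / a0)).
    have := floor_itv (y / a0); set k := Num.floor _ => /andP [h1 h2].
    have Gr : G (y - k%:~R * a0) by apply: (Gsub) => //; apply: (Gint); case: Pa0.
    have h1' : k%:~R * a0 <= y by rewrite -ler_pdivlMr.
    have h2' : y < k%:~R * a0 + a0.
      have : y < (k + 1)%:~R * a0 by rewrite -ltr_pdivrMr.
      by rewrite intrD mulrDl mul1r.
    have [rpos|] := ltrP 0 (y - k%:~R * a0).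
      have := ge_inf Plb (conj Gr rpos); rewrite -/a0; lra.
    lra.
  have [m pm] := mult p Gp.
  have [n an] := mult a Ga.
  apply: airr; exists (n%:~R / m%:~R).
  have m0 : (m%:~R : R) != 0 by apply/eqP => m0; move: pm p0; rewrite m0 mul0r => ->; rewrite ltxx.
  have mq : (m%:~R : rat) != 0.
    by apply: contra m0; rewrite !intr_eq0.
  rewrite fmorph_div !rmorph_int pm an; field.
  by [].
move=> a0le; have a00 : a0 = 0 by apply/eqP; rewrite eq_le a0le a0ge.
have Gcl' := Gcl; move/closure_id: Gcl => ->.
move=> x B /nbhs_ballP [e /= e0 eB].
have [g [Gg g0] glt] := inf_adherent e0 Phi.
rewrite -/a0 a00 add0r in glt.
exists ((Num.floor (x / g))%:~R * g); split; first exact: Gint.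
apply: eB; rewrite -ball_normE /=.
have := floor_itv (x / g); set k := Num.floor _ => /andP [h1 h2].
have h1' : k%:~R * g <= x by rewrite -ler_pdivlMr.
have h2' : x < k%:~R * g + g.
  have : x < (k + 1)%:~R * g by rewrite -ltr_pdivrMr.
  by rewrite intrD mulrDl mul1r.
rewrite ger0_norm; lra.
Qed.
End RealPart.

Local Open Scope complex_scope.
Section Alg.
Variable R : realType.
Local Notation C := (Cplx R).

Lemma expiD (a b : R) : expi (a + b) = expi a * expi b.
Proof. by rewrite /expi cosD sinD; simpc; rewrite [_ * sin b + _]addrC. Qed.

Lemma expi0 : expi (0 : R) = 1.
Proof. by rewrite /expi cos0 sin0; simpc. Qed.

Lemma expiJ (a : R) : conjc (expi a) = expi (- a).
Proof. by rewrite /expi cosN sinN; simpc. Qed.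

Lemma expiNK (a : R) : expi (- a) * expi a = 1.
Proof. by rewrite -expiD addNr expi0. Qed.

Lemma expi2pi : expi (2 * pi : R) = 1.
Proof. by rewrite /expi mulr_natl cos2pi sin2pi; simpc. Qed.

Lemma adjM {N} (U V : 'M[C]_N) : adj (U *m V) = adj V *m adj U.
Proof. by rewrite /adj map_mxM trmx_mul. Qed.

Lemma adjK {N} (U : 'M[C]_N) : adj (adj U) = U.
Proof. by apply/matrixP => i j; rewrite /adj !mxE conjcK. Qed.

Lemma adj1 N : adj (1%:M : 'M[C]_N) = 1%:M.
Proof. by rewrite /adj map_mx1 trmx1. Qed.

Lemma adjZ N c (U : 'M[C]_N) : adj (c *: U) = conjc c *: adj U.
Proof. by apply/matrixP => i j; rewrite /adj !mxE rmorphM. Qed.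

Lemma unitaryV {N} {U : 'M[C]_N} : unitary U -> adj U *m U = 1%:M.
Proof. by move=> /mulmx1C. Qed.

Lemma unitary_inv {N} {U : 'M[C]_N} : unitary U -> invmx U = adj U.
Proof.
move=> hU; have [Uu _] := mulmx1_unit hU.
by rewrite -[invmx U]mulmx1 -hU mulmxA mulVmx // mul1mx.
Qed.

Lemma tr_adj {N} (M : 'M[C]_N) : \tr (adj M) = conjc (\tr M).
Proof. by rewrite /adj mxtrace_tr (trace_map_mx (conjc : {rmorphism C -> C})). Qed.

Lemma tr_adj_eq0 {N} (M : 'M[C]_N) : \tr (adj M *m M) = 0 -> M = 0.
Proof.
move=> h; apply/matrixP => i j; rewrite mxE.
have e : \tr (adj M *m M) = \sum_j0 \sum_i0 M i0 j0 * conjc (M i0 j0).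
  rewrite /mxtrace; apply: eq_bigr => k _; rewrite mxE.
  by apply: eq_bigr => l _; rewrite /adj !mxE mulrC.
move: h; rewrite e => h.
have h1 := psumr_eq0P _ h.
have : \sum_i0 M i0 j * conjc (M i0 j) = 0.
  apply: h1 => // k _; apply: sumr_ge0 => l _; exact: mulcJ_ge0.
move/psumr_eq0P => /(_ (fun l _ => mulcJ_ge0 _) i isT).
by rewrite -sqr_normc => /eqP; rewrite sqrf_eq0 normr_eq0 => /eqP.
Qed.


Lemma adjB {N} (X Y : 'M[C]_N) : adj (X - Y) = adj X - adj Y.
Proof. by apply/matrixP => i j; rewrite /adj !mxE rmorphB. Qed.


Lemma conjug_id {N} (V X : 'M[C]_N) : unitary V -> adj V *m (V *m X *m adj V) *m V = X.
Proof.
move=> hV; rewrite !mulmxA (unitaryV hV) mul1mx -mulmxA (unitaryV hV) mulmx1.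
by [].
Qed.

Definition Gs {N} (K : set 'M[C]_N) (A : 'M[C]_N) (phi : R) :=
  exists2 U, K U & U *m A *m adj U = expi phi *: A.

Lemma conj_inv {N} {V A : 'M[C]_N} {y} : unitary V ->
  V *m A *m adj V = expi y *: A -> adj V *m A *m V = expi (- y) *: A.
Proof.
move=> hV e.
have h := conjug_id V A hV; rewrite e -scalemxAr -scalemxAl in h.
by rewrite -{2}h scalerA expiNK scale1r.
Qed.

Section WithK.
Variables (N : nat) (K : set 'M[C]_N) (A : 'M[C]_N).
Hypothesis hK : compact_connected_subgroup_UN K.

Let Kun : forall U, K U -> unitary U. Proof. by case: hK. Qed.
Let K1 : K 1%:M. Proof. by case: hK => _ []. Qed.
Let KM : forall U V, K U -> K V -> K (U *m V). Proof. by case: hK => _ [_ []]. Qed.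
Let Kadj : forall U, K U -> K (adj U).
Proof.
move=> U KU; have hinv : forall U, K U -> K (invmx U) by case: hK => _ [_ [_ []]].
by rewrite -(unitary_inv (Kun _ KU)); apply: hinv.
Qed.

Lemma Gs_sub x y : Gs K A x -> Gs K A y -> Gs K A (x - y).
Proof.
move=> [U KU eU] [V KV eV]; exists (adj V *m U); first by apply: KM => //; apply: Kadj.
rewrite adjM adjK.
have -> : adj V *m U *m A *m (adj U *m V) = adj V *m (U *m A *m adj U) *m V by rewrite !mulmxA.
rewrite eU -scalemxAr -scalemxAl (conj_inv (Kun _ KV) eV).
by rewrite scalerA -expiD.
Qed.

Lemma Gs_to_a phi : Gs K A phi -> cond_a K A phi.
Proof.
move=> [U KU eU]; have eU' := conj_inv (Kun _ KU) eU.
rewrite /cond_a /orbitK; apply/seteqP; split.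
  move=> _ [_ [V KV <-] <-]; exists (V *m U); first exact: KM.
  rewrite adjM.
  have -> : V *m U *m A *m (adj U *m adj V) = V *m (U *m A *m adj U) *m adj V by rewrite !mulmxA.
  by rewrite eU -scalemxAr -scalemxAl.
move=> _ [V KV <-]; exists (V *m adj U *m A *m adj (V *m adj U)).
  by exists (V *m adj U) => //; apply: KM => //; apply: Kadj.
rewrite adjM adjK.
have -> : V *m adj U *m A *m (U *m adj V) = V *m (adj U *m A *m U) *m adj V by rewrite !mulmxA.
rewrite eU' -scalemxAr -scalemxAl scalerA.
rewrite mulrC expiNK.
by rewrite scale1r.
Qed.

Lemma a_to_b phi : cond_a K A phi -> cond_b K A phi.
Proof.
move=> ha Cm.
have WKE : WK K Cm A = (fun X => \tr (adj Cm *m X)) @` orbitK K A.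
  by rewrite /WK /orbitK image_comp.
rewrite WKE -[in RHS]ha !image_comp; apply: eq_imagel => X _ /=.
by rewrite -scalemxAr mxtraceZ.
Qed.

Lemma b_to_c phi : cond_b K A phi -> cond_c K A phi.
Proof. by move=> hb; exact: hb. Qed.

Lemma c_to_Gs phi : cond_c K A phi -> Gs K A phi.
Proof.
move=> hc.
set n2 := \tr (adj A *m A).
have : WK K A A n2 by exists 1%:M => //; rewrite mul1mx adj1 mulmx1.
rewrite -hc => -[w [U KU <-] ew].
have hU := Kun _ KU.
set e := expi phi; set X := U *m A *m adj U.
set Y := e *: X.
have tY : \tr (adj Y *m Y) = n2.
  rewrite /Y adjZ -scalemxAl -scalemxAr !mxtraceZ mulrA /e expiJ expiNK mul1r.
  have -> : adj X *m X = U *m (adj A *m (adj U *m U) *m A) *m adj U.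
    by rewrite /X !adjM adjK !mulmxA.
  rewrite (unitaryV hU) mulmx1 mxtrace_mulC.
  rewrite [adj U *m _]mulmxA mulmxA (unitaryV hU) mul1mx.
  by [].
have tAY : \tr (adj A *m Y) = n2 by rewrite /Y -scalemxAr mxtraceZ.
have tYA : \tr (adj Y *m A) = n2.
  have -> : adj Y *m A = adj (adj A *m Y) by rewrite adjM adjK.
  by rewrite tr_adj tAY /n2 -tr_adj adjM adjK.
have hYA : Y = A.
  apply/eqP; rewrite -subr_eq0; apply/eqP; apply: tr_adj_eq0.
  rewrite adjB mulmxBl !mulmxBr !raddfB /= tY tAY tYA.
  by rewrite !subrr addr0.
exists (adj U); first exact: Kadj.
rewrite adjK -{1}hYA /Y -scalemxAr -scalemxAl.
by rewrite (conjug_id U A hU).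
Qed.

End WithK.

Lemma conjc_continuous : continuous (conjc : C -> C).
Proof.
move=> x B /nbhs_ballP [e e0 eB]; apply/nbhs_ballP; exists e => // t hxt.
apply: eB; move: hxt; rewrite -!ball_normE /=.
by rewrite -rmorphB normcJ.
Qed.

Lemma normC_real (r : R) : `|(r%:C : C)| = `|r|%:C.
Proof. by rewrite normc_def /= expr0n /= addr0 sqrtr_sqr. Qed.

Lemma realC_continuous : continuous (fun r : R => (r%:C : C)).
Proof.
move=> x B /nbhs_ballP [e e0 eB]; apply/nbhs_ballP.
have /andP [/eqP eIm eRe] : (complex.Im e == complex.Im (0:C)) && (complex.Re (0:C) < complex.Re e) by rewrite -ltcE.
exists (complex.Re e) => // t hxt.
apply: eB; move: hxt; rewrite -!ball_normE /= => h.
have -> : e = (complex.Re e)%:C by apply/eqP; rewrite eq_complex /= eIm !eqxx.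
by rewrite -rmorphB normC_real ltcR.
Qed.

Lemma expi_continuous : continuous (@expi R).
Proof.
move=> x; rewrite /expi.
apply: cvgD.
  exact: continuous_comp (@continuous_cos R x) (realC_continuous _).
apply: cvgM; first exact: cvg_cst.
exact: continuous_comp (@continuous_sin R x) (realC_continuous _).
Qed.

Lemma sum_continuous {T : topologicalType} (I : Type) (r : seq I) (F : I -> T -> C) :
  (forall k, continuous (F k)) -> continuous (fun x => \sum_(k <- r) F k x).
Proof.
move=> hF; elim: r => [|k r IH].
  have -> : (fun x => \sum_(k <- [::]) F k x) = (fun=> 0) by apply: funext => x; rewrite big_nil.
  exact: cst_continuous.
have -> : (fun x => \sum_(j <- k :: r) F j x) = F k + (fun x => \sum_(j <- r) F j x).
  by apply: funext => x; rewrite big_cons.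
move=> x; apply: cvgD; [exact: (hF k x) | exact: (IH x)].
Qed.

Lemma contM {T : topologicalType} (f g : T -> C) :
  continuous f -> continuous g -> continuous (fun x => f x * g x).
Proof. by move=> hf hg x; exact: (cvgM (hf x) (hg x)). Qed.

Lemma mx_continuous {T : topologicalType} m n (f : T -> 'M[C]_(m, n)) :
  (forall i j, continuous (fun x => f x i j)) -> continuous f.
Proof.
move=> hf x B /nbhs_ballP [e e0 eB].
apply: (filterS (P := fun t => forall i j, ball (f x i j) e (f t i j))).
  move=> t ht; apply: eB.
  exact: (conj e0 ht).
apply: filter_forall => i; apply: filter_forall => j.
have hb : nbhs (f x i j) (ball (f x i j) e) by apply: nbhsx_ballx.
have h2 := @hf i j x (ball (f x i j) e).
move: (h2 hb) => H.
rewrite nbhs_filterE in H.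
exact H.
Qed.

Lemma conjug_continuous N (A : 'M[C]_N) :
  continuous (fun V : 'M[C]_N => V *m A *m adj V).
Proof.
apply: mx_continuous => i j.
have -> : (fun V : 'M[C]_N => (V *m A *m adj V) i j) =
  (fun V => \sum_k (\sum_l V i l * A l k) * conjc (V j k)).
  apply: funext => V; rewrite !mxE; apply: eq_bigr => k _; rewrite !mxE.
  by [].
apply: sum_continuous => k.
apply: (@contM _ (fun W : 'M[C]_N => \sum_l W i l * A l k) (fun W => conjc (W j k))).
  apply: sum_continuous => l.
  apply: (@contM _ (fun W : 'M[C]_N => W i l) (fun=> A l k)).
    exact: coord_continuous.
  exact: cst_continuous.
move=> W; exact: (continuous_comp (@coord_continuous C N N j k W) (conjc_continuous _)).
Qed.

Lemma Gs_closed N (K : set 'M[C]_N) (A : 'M[C]_N) :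
  compact K -> closed [set phi | Gs K A phi].
Proof.
move=> cK.
have cO := continuous_compact (continuous_subspaceT (@conjug_continuous N A)) cK.
have clO := compact_closed (@norm_hausdorff _ _) cO.
have g_cont : continuous (fun phi : R => expi phi *: A).
  by move=> x; apply: continuousZr_tmp; exact: (expi_continuous x).
exact: (proj1 (continuous_closedP _) g_cont _ clO).
Qed.

End Alg.


Theorem proposition2p12 (R : realType) (N : nat) (K : set 'M[Cplx R]_N)
    (A : 'M[Cplx R]_N) (phi0 : R) :
  compact_connected_subgroup_UN K ->
  ((cond_a K A phi0 <-> cond_b K A phi0) /\
   (cond_b K A phi0 <-> cond_c K A phi0)) /\
  ((~ exists q : rat, phi0 = 2 * pi * ratr q) ->
   (cond_a K A phi0 \/ cond_b K A phi0 \/ cond_c K A phi0) ->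
   forall phi : R, cond_a K A phi /\ cond_b K A phi /\ cond_c K A phi).
Proof.
move=> hK.
have Kcomp : compact K by case: hK => _ [_ [_ [_ []]]].
have ab := @a_to_b R N K A.
have bc := @b_to_c R N K A.
have cG := @c_to_Gs R N K A hK.
have Ga := @Gs_to_a R N K A hK.
split.
  split; split.
  - by move=> ha; apply: ab.
  - by move=> hb; apply: Ga; apply: cG; apply: bc.
  - by move=> hb; apply: bc.
  - by move=> hc; apply: ab; apply: Ga; apply: cG.
move=> irr hor.
have G0 : Gs R K A phi0.
  case: hor => [ha|[hb|hc]]; apply: cG => //; apply: bc => //; exact: ab.
have Gall : forall x, Gs R K A x.
  apply: (@subgroup_all R [set x | Gs R K A x] (2 * pi) phi0).
  - by move=> x y; apply: Gs_sub.
  - exists 1%:M; first by case: hK => _ [].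
    by rewrite expi2pi scale1r mul1mx adj1 mulmx1.
  - by rewrite mulr_gt0 ?pi_gt0.
  - exact: G0.
  - exact: irr.
  - exact: Gs_closed.
move=> phi; have ha := Ga _ (Gall phi).
have hb := ab _ ha.
by split; [exact: ha | split; [exact: hb | exact: bc]].
Qed.
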